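(* Let $(M,d)$ be a $\mathrm{CAT}(0)$ space, $x_1,\dots,x_n\in M$, $b_n$ their barycenter (the unique minimizer of $b\mapsto\frac1n\sum_i d(x_i,b)^2$), and $D$ the diameter of $\{x_1,\dots,x_n\}$. Let $I_1,\dots,I_m$ be i.i.d. uniform on $\{1,\dots,n\}$, $X_k=x_{I_k}$, and $\tilde b_m=\tilde B_m^{(t)}(X_1,\dots,X_m)$ with $t=(1/2,1/3,\dots,1/m)$. Let $\eta>0$ and $\delta\in(0,1)$. If $m\ge\frac{4D^2}{\eta^2}\max(1,\log(1/\delta))$, then $d(\tilde b_m,b_n)\le\eta$ with probability at least $1-\delta$.
   Context: A $\mathrm{CAT}(0)$ space is a complete geodesic metric space in which every geodesic triangle is no fatter than its Euclidean comparison triangle; geodesics are unique. Iterated barycenter: for $t=(t_2,\dots,t_m)\in(0,1)^{m-1}$, set $\tilde b_1=x_1$ and $\tilde b_k=\gamma_k(t_k)$ where $\gamma_k:[0,1]\to M$ is the constant-speed geodesic from $\tilde b_{k-1}$ to $x_k$; $\tilde B_m^{(t)}(x_1,\dots,x_m)=\tilde b_m$. *)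

(* Defs.v *)
From HB Require Import structures.
From mathcomp Require Import all_boot all_order all_algebra.
From mathcomp Require Import all_classical all_reals exp.
Set Implicit Arguments. Unset Strict Implicit. Unset Printing Implicit Defensive.
Import Order.TTheory GRing.Theory Num.Theory.
Local Open Scope ring_scope.

Section CAT0.
Variables (R : realType) (M : Type) (d : M -> M -> R).

Definition is_metric : Prop :=
  (forall x y, 0 <= d x y) /\ (forall x y, d x y = 0 <-> x = y) /\
  (forall x y, d x y = d y x) /\ (forall x y z, d x z <= d x y + d y z).

Definition is_complete : Prop :=
  forall u : nat -> M,
    (forall e, 0 < e -> exists N, forall p q, (N <= p)%N -> (N <= q)%N ->
        d (u p) (u q) < e) ->
    exists l, forall e, 0 < e -> exists N, forall p, (N <= p)%N -> d (u p) l < e.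

(* constant-speed geodesic g : [0,1] -> M from x to y (values outside [0,1]
   are irrelevant) *)
Definition is_geodesic (g : R -> M) (x y : M) : Prop :=
  g 0 = x /\ g 1 = y /\
  forall s t, 0 <= s <= 1 -> 0 <= t <= 1 -> d (g s) (g t) = `|s - t| * d x y.

(* CAT(0) comparison: for a geodesic triangle x y z, points p = g1 s on [x,y]
   and q = g2 u on [x,z]; the squared distance of the comparison points in the
   Euclidean comparison triangle is (law of cosines)
   s^2 d(x,y)^2 + u^2 d(x,z)^2 - s u (d(x,y)^2 + d(x,z)^2 - d(y,z)^2). *)
Definition cat0_comparison : Prop :=
  forall x y z (g1 g2 : R -> M) s u,
    is_geodesic g1 x y -> is_geodesic g2 x z ->
    0 <= s <= 1 -> 0 <= u <= 1 ->
    d (g1 s) (g2 u) ^+ 2 <=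
      s ^+ 2 * d x y ^+ 2 + u ^+ 2 * d x z ^+ 2
      - s * u * (d x y ^+ 2 + d x z ^+ 2 - d y z ^+ 2).

Definition is_CAT0 : Prop :=
  [/\ is_metric, is_complete, (forall x y, exists g, is_geodesic g x y)
    & cat0_comparison].

(* iterated barycenter: geo x y is the geodesic from x to y, t k = t_k.
   iter_bary_aux k b s : current point b = b~_k, remaining points s. *)
Fixpoint iter_bary_aux (geo : M -> M -> R -> M) (t : nat -> R)
    (k : nat) (b : M) (s : seq M) : M :=
  match s with
  | [::] => b
  | y :: s' => iter_bary_aux geo t k.+1 (geo b y (t k.+1)) s'
  end.

(* B~^(t)(x_1,...,x_m) for s = [:: x_1; ...; x_m]; dflt is only returned on
   the empty sequence *)
Definition iter_bary (geo : M -> M -> R -> M) (t : nat -> R) (dflt : M)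
    (s : seq M) : M :=
  match s with
  | [::] => dflt
  | x1 :: s' => iter_bary_aux geo t 1 x1 s'
  end.

End CAT0.

(* Main.v *)
Require Import Defs.
From HB Require Import structures.
From mathcomp Require Import all_boot all_order all_algebra.
From mathcomp Require Import all_classical all_reals exp.
From mathcomp Require ring lra interval_inference.
From mathcomp Require topology normedtype sequences derive realfun convex.
Import Order.TTheory GRing.Theory Num.Theory.
Local Open Scope ring_scope.

Module T1.
Import ring lra interval_inference topology normedtype sequences derive realfun convex.
Import Order.TTheory GRing.Theory Num.Theory numFieldNormedType.Exports.
Local Open Scope ring_scope. Local Open Scope classical_set_scope.

Section S.
Variable R : realType.

Lemma mono_helper (f df : R -> R) a : 0 <= a ->
  (forall x : R, is_derive x 1 f (df x)) -> (forall x, 0 <= x <= a -> 0 <= df x) ->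
  f 0 <= f a.
Proof.
move=> a0 fd dfp.
have fc : {within `[0, a], continuous f}.
  by apply: derivable_within_continuous => x _; case: (fd x).
have [c /[!in_itv] /= /andP[c0 ca] E] := @MVT_segment R f df 0 a a0 (fun x _ => fd x) fc.
rewrite -subr_ge0 E mulr_ge0 ?subr0 //; apply: dfp; by rewrite c0.
Qed.

Lemma expR_N_le (x : R) : 0 <= x -> expR (- x) <= expR x.
Proof. by move=> x0; rewrite ler_expR; lra. Qed.

Lemma kfun_ge0 (a : R) : 0 <= a ->
  expR a - expR (-a) <= a * (expR a + expR (-a)).
Proof.
move=> a0.
pose f := fun y : R => y * (expR y + expR (-y)) - (expR y - expR (-y)).
pose df := fun y : R => y * (expR y - expR (-y)).
have fd (x : R) : is_derive x 1 f (df x).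
  rewrite /f /df.
  apply: is_derive_eq.
  by rewrite -[LHS]/(x * _ + _ * 1 - _); ring.
have H : f 0 <= f a.
  apply: (@mono_helper f df a a0 fd) => y /andP[y0 _].
  by rewrite /df mulr_ge0// subr_ge0 expR_N_le.
move: H; rewrite /f /= mul0r oppr0 expR0 subrr subr0; lra.
Qed.
End S.
Section S2.
Variable R : realType.
Lemma cosh_le (a : R) : 0 <= a ->
  expR a + expR (-a) <= 2 * expR (a * a / 2).
Proof.
move=> a0.
pose f := fun y : R => - ((expR y + expR (- y)) * expR (- (y * y / 2))).
pose df := fun y : R => (y * (expR y + expR (-y)) - (expR y - expR (-y))) * expR (- (y * y / 2)).
have fd (x : R) : is_derive x 1 f (df x).
  rewrite /f /df.
  apply: is_derive_eq.
  have sE (u v : R) : u *: v = u * v by [].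
  by rewrite /GRing.scale/=; field.
have H : f 0 <= f a.
  have T := @mono_helper R f df a a0 fd.
  apply: T => y /andP[y0 _].
  rewrite /df mulr_ge0 ?expR_ge0// subr_ge0.
  by have := @kfun_ge0 R y y0; lra.
move: H; rewrite /f /= mul0r oppr0 expR0 mul0r oppr0 expR0 mulr1 lerN2.
rewrite [expR (- (_ / 2))]expRN => H.
have ep := expR_gt0 (a * a / 2).
by move: H; rewrite ler_pdivrMr // mulrC -[1 + 1]/(2%:R).
Qed.
End S2.
Section S3.
Variable R : realType.
Local Open Scope convex_scope.

Lemma chord (l c y : R) : 0 < c -> `|y| <= c ->
  expR (l * y) <= (c - y) / (2 * c) * expR (- (l * c)) + (c + y) / (2 * c) * expR (l * c).
Proof.
move=> c0 yc.
have [y1 y2] : - c <= y /\ y <= c by move: yc; rewrite ler_norml => /andP[].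
have t0 : 0 <= (c - y) / (2 * c) by rewrite divr_ge0 //; lra.
have t1 : (c - y) / (2 * c) <= 1 by rewrite ler_pdivrMr; lra.
have := @convex_expR R (Itv01 t0 t1) (- (l * c)) (l * c).
rewrite !convRE /= /unstable.onem.
have -> : (c - y) / (2 * c) * - (l * c) + (1 - (c - y) / (2 * c)) * (l * c) = l * y.
  by field; lra.
have -> : 1 - (c - y) / (2 * c) = (c + y) / (2 * c) by field; lra.
done.
Qed.

Lemma cosh_le_all (a : R) : expR a + expR (-a) <= 2 * expR (a * a / 2).
Proof.
have [a0|a0] := leP 0 a; first exact: cosh_le.
have na : 0 <= - a by lra.
have := @cosh_le R (- a) na; rewrite opprK mulrNN; lra.
Qed.

Lemma sv_bound n (Y : 'I_n -> R) (l c : R) : (0 < n)%N ->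
  \sum_i Y i = 0 -> (forall i, `|Y i| <= c) ->
  n%:R^-1 * \sum_i expR (l * Y i) <= expR (l * l * (c * c) / 2).
Proof.
move=> n0 s0 Yc.
have c0 : 0 <= c by case: n n0 Y s0 Yc => // n _ Y _ /(_ ord0); apply: le_trans.
have nR : 0 < n%:R :> R by rewrite ltr0n.
have [ce0|cp] := eqVneq c 0.
  have Y0 i : Y i = 0 by apply/normr0_eq0/le_anti; rewrite normr_ge0 andbT -ce0.
  under eq_bigr do rewrite Y0 mulr0 expR0.
  rewrite sumr_const card_ord -mulr_natr mul1r mulVf ?pnatr_eq0 -?lt0n //.
  by rewrite ce0 !mul0r mulr0 mul0r expR0.
have cp' : 0 < c by rewrite lt_def cp.
apply: (le_trans (y := n%:R^-1 * \sum_i ((c - Y i) / (2 * c) * expR (- (l * c)) + (c + Y i) / (2 * c) * expR (l * c)))).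
  apply: ler_wpM2l; first by rewrite invr_ge0 ltW.
  by apply: ler_sum => i _; apply: chord.
have -> : \sum_i ((c - Y i) / (2 * c) * expR (- (l * c)) + (c + Y i) / (2 * c) * expR (l * c))
    = \sum_(i < n) ((expR (l * c) + expR (- (l * c))) / 2 + Y i * ((expR (l * c) - expR (- (l * c))) / (2 * c))).
  by apply: eq_bigr => i _; field; rewrite cp.
rewrite big_split /= -[X in _ + X]mulr_suml s0 mul0r addr0 sumr_const card_ord.
rewrite -[X in _^-1 * X]mulr_natr mulrCA mulVf ?pnatr_eq0 -?lt0n // mulr1.
have := cosh_le_all (l * c).
have -> : l * c * (l * c) / 2 = l * l * (c * c) / 2 by ring.
lra.
Qed.
End S3.

End T1.

Module T3.
Import ring lra interval_inference topology normedtype sequences derive realfun convex.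
Import T1.
Import Order.TTheory GRing.Theory Num.Theory numFieldNormedType.Exports.
Set Implicit Arguments. Unset Strict Implicit.
Local Open Scope ring_scope.

Section Avg.
Variables (R : realType) (n : nat).
Hypothesis n0 : (0 < n)%N.

Fixpoint avg (k : nat) (G : seq 'I_n -> R) : R :=
  match k with
  | 0 => G [::]
  | k.+1 => n%:R^-1 * \sum_(i < n) avg k (fun s => G (i :: s))
  end.

Lemma nR_gt0 : 0 < n%:R :> R. Proof. by rewrite ltr0n. Qed.
Lemma nR_neq0 : n%:R != 0 :> R. Proof. by rewrite pnatr_eq0 -lt0n. Qed.

Lemma avg_le k (G H : seq 'I_n -> R) :
  (forall s, size s = k -> G s <= H s) -> avg k G <= avg k H.
Proof.
elim: k G H => [|k IH] G H GH /=; first exact: GH.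
apply: ler_wpM2l; first by rewrite invr_ge0 ltW // nR_gt0.
apply: ler_sum => i _; apply: IH => s hs; apply: GH; by rewrite /= hs.
Qed.

Lemma avg_ext k (G H : seq 'I_n -> R) :
  (forall s, size s = k -> G s = H s) -> avg k G = avg k H.
Proof.
move=> GH; apply/le_anti; rewrite !avg_le // => s hs; by rewrite GH.
Qed.

Lemma avg_cst k (a : R) : avg k (fun _ => a) = a.
Proof.
elim: k => [|k IH] //=; under eq_bigr do rewrite IH.
by rewrite sumr_const card_ord -[X in _^-1 * X]mulr_natr mulrCA mulVf ?nR_neq0 // mulr1.
Qed.

Lemma avg_add k (G H : seq 'I_n -> R) :
  avg k (fun s => G s + H s) = avg k G + avg k H.
Proof.
elim: k G H => [|k IH] G H //=.
under eq_bigr => i _ do rewrite (IH (fun s => G (i :: s))).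
by rewrite big_split /= mulrDr.
Qed.

Lemma avg_scale k (a : R) (G : seq 'I_n -> R) :
  avg k (fun s => a * G s) = a * avg k G.
Proof.
elim: k G => [|k IH] G //=.
under eq_bigr => i _ do rewrite (IH (fun s => G (i :: s))).
by rewrite -mulr_sumr mulrCA.
Qed.

Lemma avg_sub k (G H : seq 'I_n -> R) :
  avg k (fun s => G s - H s) = avg k G - avg k H.
Proof.
rewrite (avg_ext (H := fun s => G s + (-1) * H s)); last by move=> s _; rewrite mulN1r.
by rewrite avg_add avg_scale mulN1r.
Qed.

Lemma nK (x : R) : (n%:R^-1 * x) *+ n = x.
Proof. by rewrite -[LHS]mulr_natl mulrA mulfV ?nR_neq0 // mul1r. Qed.

Definition bdiff k (G : seq 'I_n -> R) (c : R) :=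
  forall p q y y', (size p + size q).+1 = k ->
    `|G (p ++ y :: q) - G (p ++ y' :: q)| <= c.

Lemma conc k (G : seq 'I_n -> R) (c l : R) : 0 <= c -> bdiff k G c ->
  avg k (fun s => expR (l * (G s - avg k G))) <= expR (k%:R * (l * l * (c * c)) / 2).
Proof.
move=> c0; elim: k G => [|k IH] G bd.
  by rewrite /= subrr mulr0 mul0r mul0r expR0.
set g := fun i : 'I_n => avg k (fun s => G (i :: s)).
set mu := avg k.+1 G.
have muE : mu = n%:R^-1 * \sum_i g i by [].
have bdi (i : 'I_n) : bdiff k (fun s => G (i :: s)) c.
  move=> p q y y' hs; apply: (bd (i :: p)); by rewrite /= addSn hs.
rewrite /=.
under eq_bigr => i _.
  rewrite (avg_ext (H := fun s => expR (l * (g i - mu)) * expR (l * (G (i :: s) - g i)))); last first.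
    by move=> s _; rewrite -expRD -mulrDr; congr (expR (l * _)); ring.
  rewrite avg_scale.
over.
apply: (le_trans (y := n%:R^-1 * \sum_(i < n) expR (l * (g i - mu)) * expR (k%:R * (l * l * (c * c)) / 2))).
  apply: ler_wpM2l; first by rewrite invr_ge0 ltW // nR_gt0.
  apply: ler_sum => i _; apply: ler_wpM2l; first exact: expR_ge0.
  exact: IH.
rewrite -mulr_suml.
set K := expR (k%:R * (l * l * (c * c)) / 2).
set SE := \sum_(i < n) _.
have -> : n%:R^-1 * (SE * K) = K * (n%:R^-1 * SE) by ring.
have -> : (k.+1)%:R * (l * l * (c * c)) / 2 = k%:R * (l * l * (c * c)) / 2 + l * l * (c * c) / 2.
  by rewrite -addn1 natrD; ring.
rewrite expRD; apply: ler_wpM2l; first exact: expR_ge0.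
have gd (i j : 'I_n) : `|g i - g j| <= c.
  rewrite /g -avg_sub ler_norml; apply/andP; split.
    rewrite -(avg_cst k (- c)); apply: avg_le => s hs.
    have := bd [::] s i j; rewrite /= hs => /(_ erefl); rewrite ler_norml => /andP[] //.
  rewrite -(avg_cst k c); apply: avg_le => s hs.
  have := bd [::] s i j; rewrite /= hs => /(_ erefl); rewrite ler_norml => /andP[] //.
apply: (@sv_bound R n (fun i => g i - mu)) => //.
  by rewrite sumrB sumr_const card_ord muE nK subrr.
move=> i.
have -> : g i - mu = n%:R^-1 * \sum_(j < n) (g i - g j).
  rewrite sumrB sumr_const card_ord muE mulrBr.
  by rewrite -[X in _ = _ * X - _]mulr_natr mulrCA mulVf ?nR_neq0 // mulr1.
rewrite normrM (@ger0_norm _ n%:R^-1); last by rewrite invr_ge0 ler0n.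
apply: (le_trans (y := n%:R^-1 * \sum_(j < n) c)).
  apply: ler_wpM2l; first by rewrite invr_ge0 ltW // nR_gt0.
  apply: (le_trans (ler_norm_sum _ _ _)).
  by apply: ler_sum => j _; apply: gd.
by rewrite sumr_const card_ord -[X in _ * X]mulr_natr mulrCA mulVf ?nR_neq0 // mulr1.
Qed.

Definition cf k (p : 'I_n * {ffun 'I_k -> 'I_n}) : {ffun 'I_k.+1 -> 'I_n} :=
  [ffun j => if unlift ord0 j is Some j' then p.2 j' else p.1].
Definition icf k (I : {ffun 'I_k.+1 -> 'I_n}) : 'I_n * {ffun 'I_k -> 'I_n} :=
  (I ord0, [ffun j => I (lift ord0 j)]).

Lemma cf_bij k : bijective (@cf k).
Proof.
exists (@icf k).
  case=> i J; rewrite /icf /cf /=; congr pair; first by rewrite ffunE unlift_none.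
  by apply/ffunP => j; rewrite !ffunE liftK.
move=> I; apply/ffunP => j; rewrite /icf /cf ffunE /=.
by case: unliftP => [j' ->|->]; rewrite ?ffunE.
Qed.

Lemma cf_seq k p :
  [seq (@cf k p) j | j <- enum 'I_k.+1] = p.1 :: [seq p.2 j | j <- enum 'I_k].
Proof.
rewrite enum_ordSl /= /cf ffunE unlift_none; congr cons.
by rewrite -map_comp; apply: eq_map => j /=; rewrite ffunE liftK.
Qed.

Lemma sum_ffun_avg k (G : seq 'I_n -> R) :
  \sum_(I : {ffun 'I_k -> 'I_n}) G [seq I j | j <- enum 'I_k] = n%:R ^+ k * avg k G.
Proof.
elim: k G => [|k IH] G.
  have -> : enum 'I_0 = [::] by apply/size0nil; rewrite size_enum_ord.
  by rewrite /= sumr_const card_ffun !card_ord expn0 expr0 mul1r.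
rewrite (reindex (@cf k)); last by apply: onW_bij; apply: cf_bij.
under eq_bigr do rewrite cf_seq.
rewrite -(pair_big xpredT xpredT (fun (i : 'I_n) (J : {ffun 'I_k -> 'I_n}) => G (i :: [seq J j | j <- enum 'I_k]))) /=.
under eq_bigr => i _ do rewrite (IH (fun s => G (i :: s))).
rewrite -mulr_sumr /= exprS.
set S := \sum_(i < n) _.
have := nR_neq0; move: (n%:R) => N N0; by field.
Qed.

End Avg.

End T3.

Module T4.
Import ring lra.
Import Order.TTheory GRing.Theory Num.Theory.
Set Implicit Arguments. Unset Strict Implicit.
Local Open Scope ring_scope.

Section Geo.
Variables (R : realType) (M : Type) (d : M -> M -> R) (geo : M -> M -> R -> M).
Hypothesis hM : is_CAT0 d.
Hypothesis hgeo : forall x y, is_geodesic d (geo x y) x y.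

Lemma d_ge0 x y : 0 <= d x y.
Proof. by case: hM => [[]]. Qed.
Lemma d_sym x y : d x y = d y x.
Proof. by case: hM => [[_ [_ []]]]. Qed.
Lemma d_tri x y z : d x z <= d x y + d y z.
Proof. by case: hM => [[_ [_ [_]]]]. Qed.
Lemma d_xx x : d x x = 0.
Proof. by case: hM => [[_ [H _]]] _ _ _; apply/H. Qed.
Lemma comp : cat0_comparison d.
Proof. by case: hM. Qed.

Lemma geo0 x y : geo x y 0 = x. Proof. by case: (hgeo x y). Qed.
Lemma geo1 x y : geo x y 1 = y. Proof. by case: (hgeo x y) => _ []. Qed.

Lemma sq_le (a b : R) : 0 <= a -> 0 <= b -> a ^+ 2 <= b ^+ 2 -> a <= b.
Proof. by move=> a0 b0 h; rewrite -(@ler_pXn2r _ 2) // ?nnegrE. Qed.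

Lemma cvx a y z t : 0 <= t <= 1 ->
  d (geo a y t) z ^+ 2 <= (1 - t) * d a z ^+ 2 + t * d y z ^+ 2 - t * (1 - t) * d a y ^+ 2.
Proof.
move=> ht.
have := comp (hgeo a y) (hgeo a z) ht (s := t) (u := 1).
rewrite geo1 => /(_ _); rewrite ler01 lexx => /(_ erefl) H.
apply: (le_trans H); rewrite le_eqVlt; apply/orP; left; apply/eqP; ring.
Qed.

Lemma geoD1 c y y' t : 0 <= t <= 1 -> d (geo c y t) (geo c y' t) <= t * d y y'.
Proof.
move=> ht; have t0 : 0 <= t by case/andP: ht.
have := comp (hgeo c y) (hgeo c y') ht ht.
have -> : t ^+ 2 * d c y ^+ 2 + t ^+ 2 * d c y' ^+ 2 -
    t * t * (d c y ^+ 2 + d c y' ^+ 2 - d y y' ^+ 2) = (t * d y y') ^+ 2 by ring.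
by apply: sq_le; rewrite ?d_ge0 ?mulr_ge0 ?d_ge0.
Qed.

Lemma geo_rev c y : is_geodesic d (fun s => geo c y (1 - s)) y c.
Proof.
case: (hgeo c y) => g0 [g1 gd]; split; first by rewrite subr0.
split; first by rewrite subrr.
move=> s u hs hu; rewrite gd; first by rewrite d_sym; congr (_ * _); rewrite -normrN; congr `|_|; ring.
  by case/andP: hs => ? ?; apply/andP; split; lra.
by case/andP: hu => ? ?; apply/andP; split; lra.
Qed.

Lemma geoD2 c c' y t : 0 <= t <= 1 -> d (geo c y t) (geo c' y t) <= (1 - t) * d c c'.
Proof.
move=> ht; have [t0 t1] : 0 <= t /\ t <= 1 by case/andP: ht.
have hs : 0 <= 1 - t <= 1 by apply/andP; split; lra.
have := comp (geo_rev c y) (geo_rev c' y) hs hs.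
have -> : 1 - (1 - t) = t by ring.
have -> : (1 - t) ^+ 2 * d y c ^+ 2 + (1 - t) ^+ 2 * d y c' ^+ 2 -
    (1 - t) * (1 - t) * (d y c ^+ 2 + d y c' ^+ 2 - d c c' ^+ 2) = ((1 - t) * d c c') ^+ 2 by ring.
by apply: sq_le; rewrite ?d_ge0 ?mulr_ge0 ?d_ge0 ?subr_ge0.
Qed.

Definition tt := fun k : nat => (k%:R : R)^-1.
Definition A := iter_bary_aux geo tt.
Lemma A_nil k c : A k c [::] = c. Proof. by []. Qed.
Lemma A_cons k c y l : A k c (y :: l) = A k.+1 (geo c y (tt k.+1)) l. Proof. by []. Qed.

Lemma tt_in k : 0 <= tt k.+1 <= 1.
Proof.
rewrite /tt invr_ge0 ler0n /= invf_le1 ?ltr0n //.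
by rewrite ler1n.
Qed.

Lemma contr k c c' l :
  (k%:R + (size l)%:R) * d (A k c l) (A k c' l) <= k%:R * d c c'.
Proof.
elim: l k c c' => [|y l IH] k c c'; first by rewrite !A_nil addr0.
rewrite !A_cons.
have -> : k%:R + (size (y :: l))%:R = (k.+1)%:R + (size l)%:R :> R.
  by rewrite [size _]/= -!natr1; ring.
apply: le_trans; first exact: IH.
have := geoD2 c c' y (tt_in k).
have hk : (0 : R) <= (k.+1)%:R by rewrite ler0n.
move=> /(ler_wpM2l hk); rewrite mulrA.
have -> : (k.+1)%:R * (1 - tt k.+1) = k%:R :> R.
  rewrite /tt -natr1; field.
  by rewrite natr1 pnatr_eq0.
done.
Qed.

Lemma onepos k c p q y y' :
  (k%:R + (size p)%:R + (size q)%:R + 1) * d (A k c (p ++ y :: q)) (A k c (p ++ y' :: q))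
  <= d y y'.
Proof.
elim: p k c => [|z p IH] k c.
  rewrite !cat0s !A_cons.
  have -> : k%:R + (size (@nil M))%:R + (size q)%:R + 1 = (k.+1)%:R + (size q)%:R :> R.
    by rewrite [size _]/= -!natr1; ring.
  apply: le_trans; first exact: contr.
  have := geoD1 c y y' (tt_in k).
  have hk : (0 : R) <= (k.+1)%:R by rewrite ler0n.
  move=> /(ler_wpM2l hk); rewrite mulrA.
  have -> : (k.+1)%:R * tt k.+1 = 1 :> R by rewrite /tt mulfV // pnatr_eq0.
  by rewrite mul1r.
rewrite !cat_cons !A_cons.
have -> : k%:R + (size (z :: p))%:R = (k.+1)%:R + (size p)%:R :> R.
  by rewrite [size (_ :: _)]/= -!natr1; ring.
exact: IH.
Qed.

Variables (n : nat) (x : 'I_n -> M) (b : M).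
Hypothesis hn : (0 < n)%N.
Hypothesis hb : forall c : M, n%:R^-1 * \sum_(i < n) d (x i) b ^+ 2
                      <= n%:R^-1 * \sum_(i < n) d (x i) c ^+ 2.

Definition mean (f : 'I_n -> R) := n%:R^-1 * \sum_i f i.
Definition Fb (w : M) := mean (fun i => d (x i) w ^+ 2).

Lemma mean_le (f g : 'I_n -> R) : (forall i, f i <= g i) -> mean f <= mean g.
Proof.
move=> fg; rewrite /mean; apply: ler_wpM2l; first by rewrite invr_ge0 ler0n.
by apply: ler_sum => i _.
Qed.

Lemma mean_lin (f g : 'I_n -> R) (a e c0 : R) :
  mean (fun i => a * f i + e * g i + c0) = a * mean f + e * mean g + c0.
Proof.
rewrite /mean !big_split /= -!mulr_sumr sumr_const card_ord.
have nz : n%:R != 0 :> R by rewrite pnatr_eq0 -lt0n.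
by rewrite -[c0 *+ n]mulr_natr; field.
Qed.

Lemma mean_cst (c0 : R) : mean (fun _ => c0) = c0.
Proof.
have nz : n%:R != 0 :> R by rewrite pnatr_eq0 -lt0n.
by rewrite /mean sumr_const card_ord -[c0 *+ n]mulr_natr; field.
Qed.

Lemma Vineq z : Fb b + d b z ^+ 2 <= Fb z.
Proof.
set dl := d b z ^+ 2.
have key t : 0 < t <= 1 -> Fb b <= Fb z - (1 - t) * dl.
  move=> /andP[t0 t1].
  have h1 := hb (geo b z t).
  have h2 : Fb (geo b z t) <= (1 - t) * Fb b + t * Fb z + (- (t * (1 - t) * dl)).
    rewrite -mean_lin; apply: mean_le => i.
    rewrite d_sym (d_sym (x i) b) (d_sym (x i) z).
    by have := cvx b z (x i) (t := t); rewrite ltW //= t1 /dl => /(_ erefl).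
  have h3 : Fb b <= (1 - t) * Fb b + t * Fb z + (- (t * (1 - t) * dl)) by apply: le_trans h2.
  have h4 : t * Fb b <= t * (Fb z - (1 - t) * dl) by lra.
  by rewrite -(ler_pM2l t0).
have dl0 : 0 <= dl by rewrite exprn_ge0 // d_ge0.
rewrite leNgt; apply/negP => H.
set e := Fb b + dl - Fb z.
have e0 : 0 < e by rewrite /e; lra.
have hed : 0 < e + dl by lra.
have := key (e / (e + dl)).
have tin : 0 < e / (e + dl) <= 1.
  by rewrite divr_gt0 //= ler_pdivrMr // mul1r; lra.
move=> /(_ tin).
have -> : 1 - e / (e + dl) = dl / (e + dl) by field; rewrite gt_eqF.
move=> H2.
have eE : e = Fb b + dl - Fb z by [].
have H3 : e <= dl - dl / (e + dl) * dl by lra.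
have H4 : (e + dl) * e <= (e + dl) * (dl - dl / (e + dl) * dl).
  by apply: ler_wpM2l => //; apply: ltW.
have E5 : (e + dl) * (dl - dl / (e + dl) * dl) = dl * e by field; rewrite gt_eqF.
rewrite E5 in H4.
nra.
Qed.

End Geo.

End T4.

Module T5.
Import ring lra sequences.
Import T3 T4.
Import Order.TTheory GRing.Theory Num.Theory.
Set Implicit Arguments. Unset Strict Implicit.
Local Open Scope ring_scope.

Section Main.
Variables (R : realType) (M : Type) (d : M -> M -> R) (geo : M -> M -> R -> M).
Hypothesis hM : is_CAT0 d.
Hypothesis hgeo : forall x y, is_geodesic d (geo x y) x y.
Variables (n : nat) (x : 'I_n -> M) (b : M).
Hypothesis hn : (0 < n)%N.
Hypothesis hb : forall c : M, n%:R^-1 * \sum_(i < n) d (x i) b ^+ 2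
                      <= n%:R^-1 * \sum_(i < n) d (x i) c ^+ 2.

Notation A := (A geo).
Notation Fb := (Fb d x).
Notation mean := (@mean R n).

Lemma avg_S k (G : seq 'I_n -> R) :
  avg k.+1 G = mean (fun i => avg k (fun s => G (i :: s))).
Proof. by []. Qed.

Lemma mean_scale (a : R) (f : 'I_n -> R) : a * mean f = mean (fun i => a * f i).
Proof. by rewrite /T4.mean mulrCA mulr_sumr. Qed.

Lemma mean_lin2 (f : 'I_n -> R) (a c0 : R) : mean (fun i => a * f i + c0) = a * mean f + c0.
Proof.
have nz : n%:R != 0 :> R by rewrite pnatr_eq0 -lt0n.
rewrite /T4.mean big_split /= -mulr_sumr sumr_const card_ord.
by rewrite -[c0 *+ n]mulr_natr; field.
Qed.

Lemma phi j k c :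
  (k%:R + j%:R) ^+ 2 * avg j (fun s => d (A k c (map x s)) b ^+ 2)
  <= k%:R ^+ 2 * d c b ^+ 2 + j%:R * Fb b.
Proof.
elim: j k c => [|j IH] k c.
  by rewrite /= addr0 mul0r addr0.
rewrite avg_S.
set t := tt R k.+1.
set ci := fun i => geo c (x i) t.
have -> : mean (fun i => avg j (fun s => d (A k c (map x (i :: s))) b ^+ 2))
         = mean (fun i => avg j (fun s => d (A k.+1 (ci i) (map x s)) b ^+ 2)) by [].
have hK : (k.+1)%:R = k%:R + 1 :> R by rewrite natr1.
have hJ : (j.+1)%:R = j%:R + 1 :> R by rewrite natr1.
rewrite hJ mean_scale.
set K := k%:R; set J := j%:R.
have K0 : 0 <= K by rewrite ler0n.
have J0 : 0 <= J by rewrite ler0n.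
have tE : t = (K + 1)^-1 by rewrite /t /tt hK.
have S1 : mean (fun i => (K + (J + 1)) ^+ 2 * avg j (fun s => d (A k.+1 (ci i) (map x s)) b ^+ 2))
   <= mean (fun i => (K + 1) ^+ 2 * d (ci i) b ^+ 2 + J * Fb b).
  apply: mean_le => i.
  have := IH k.+1 (ci i); rewrite hK -/K -/J.
  by have -> : K + (J + 1) = K + 1 + J by ring.
rewrite mean_lin2 in S1.
set X := mean (fun i => d (ci i) b ^+ 2) in S1.
set DCB := d c b ^+ 2.
set V := Fb b.
have hX : X <= mean (fun i => t * d (x i) b ^+ 2 + (- (t * (1 - t))) * d (x i) c ^+ 2 + (1 - t) * DCB).
  apply: mean_le => i.
  have := cvx hM hgeo c (x i) b (t := t).
  rewrite /t; case/andP: (tt_in R k) => -> -> /(_ erefl).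
  rewrite -/t (d_sym hM c (x i)) => H.
  apply: (le_trans H); rewrite le_eqVlt; apply/orP; left; apply/eqP; rewrite /DCB; ring.
rewrite (mean_lin hn) -/V in hX.
set Fc := T4.Fb d x c in hX.
have hV : V + DCB <= Fc by rewrite /V /Fc /DCB (d_sym hM c b); apply: Vineq.
have K1 : 0 <= (K + 1) ^+ 2 by apply: exprn_ge0; lra.
have h1 := ler_wpM2l K1 hX.
have e1 : (K + 1) ^+ 2 * (t * V + - (t * (1 - t)) * Fc + (1 - t) * DCB)
    = (K + 1) * V - K * Fc + K * (K + 1) * DCB.
  rewrite tE; field; lra.
rewrite e1 in h1.
have h2 : K * (V + DCB) <= K * Fc by apply: ler_wpM2l.
apply: (le_trans S1).
have VE : Fb b = V by [].
rewrite VE; nra.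
Qed.

Definition Dm := \big[Num.max/0]_(i < n) \big[Num.max/0]_(j < n) d (x i) (x j).

Lemma dD i j : d (x i) (x j) <= Dm.
Proof.
apply: le_trans (le_bigmax _ _ i).
exact: (le_bigmax _ (fun j => d (x i) (x j)) j).
Qed.

Lemma D0 : 0 <= Dm.
Proof. exact: bigmax_ge_id. Qed.

Lemma V_le : 2 * Fb b <= Dm ^+ 2.
Proof.
have h j : Fb b + d (x j) b ^+ 2 <= Dm ^+ 2.
  rewrite (d_sym hM (x j) b); apply: le_trans (Vineq hM hgeo hn hb (x j)) _.
  rewrite -[Dm ^+ 2](mean_cst hn); apply: mean_le => i.
  by rewrite lerXn2r ?nnegrE ?d_ge0 ?D0 // dD.
have := mean_le (h).
rewrite (mean_cst hn).
have -> : mean (fun j => Fb b + d (x j) b ^+ 2) = mean (fun j => 1 * d (x j) b ^+ 2 + Fb b).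
  by congr mean; apply: funext => j; rewrite mul1r addrC.
rewrite mean_lin2 mul1r.
have -> : mean (fun j => d (x j) b ^+ 2) = Fb b by [].
lra.
Qed.

Definition Sb (s : seq 'I_n) := iter_bary geo (tt R) b (map x s).

Lemma Ebound m : (0 < m)%N -> m%:R * avg m (fun s => d (Sb s) b ^+ 2) <= Fb b.
Proof.
case: m => // m _.
rewrite avg_S.
have -> : mean (fun i => avg m (fun s => d (Sb (i :: s)) b ^+ 2))
   = mean (fun i => avg m (fun s => d (A 1 (x i) (map x s)) b ^+ 2)) by [].
have hm : (m.+1)%:R = 1 + m%:R :> R by rewrite -natr1 addrC.
rewrite hm.
have m0 : 0 < 1 + m%:R :> R by rewrite -hm ltr0n.
have H : (1 + m%:R) * ((1 + m%:R) * mean (fun i => avg m (fun s => d (A 1 (x i) (map x s)) b ^+ 2)))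
   <= (1 + m%:R) * Fb b.
  rewrite mulrA -expr2 mean_scale.
  apply: le_trans (mean_le (g := fun i => 1 * d (x i) b ^+ 2 + m%:R * Fb b) _) _.
    by move=> i; have := phi m 1 (x i); rewrite expr1n.
  rewrite mean_lin2 mul1r.
  have -> : mean (fun j => d (x j) b ^+ 2) = Fb b by [].
  lra.
by rewrite ler_pM2l in H.
Qed.

Lemma dist_diff u v : `|d u b - d v b| <= d u v.
Proof.
rewrite ler_norml; apply/andP; split.
  have := d_tri hM v u b; rewrite (d_sym hM v u); lra.
have := d_tri hM u v b; lra.
Qed.

Lemma bd_F m : (0 < m)%N -> bdiff m (fun s => d (Sb s) b) (Dm / m%:R).
Proof.
move=> m0 p q y y' hs.
have mR : 0 < m%:R :> R by rewrite ltr0n.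
apply: le_trans (dist_diff _ _) _.
rewrite ler_pdivlMr // mulrC.
apply: le_trans (dD y y').
case: p hs => [|i p] hs.
  have := contr hM hgeo 1 (x y) (x y') (map x q).
  rewrite mul1r size_map.
  have -> : 1%:R + (size q)%:R = m%:R :> R by rewrite -hs add0n -natrD.
  exact.
have := onepos hM hgeo 1 (x i) (map x p) (map x q) (x y) (x y').
rewrite !size_map.
have -> : 1%:R + (size p)%:R + (size q)%:R + 1 = m%:R :> R.
  by rewrite -hs /= -!natr1 !natrD; ring.
by rewrite /Sb !map_cat.
Qed.


Lemma avg_ge0 k (G : seq 'I_n -> R) : (forall s, 0 <= G s) -> 0 <= avg k G.
Proof. by move=> h; rewrite -(avg_cst hn k 0); apply: (avg_le hn) => // s _; apply: h. Qed.

Lemma avg_cs k (G : seq 'I_n -> R) : avg k G ^+ 2 <= avg k (fun s => G s ^+ 2).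
Proof.
set mu := avg k G.
have h0 : 0 <= avg k (fun s => G s ^+ 2 + (- (2 * mu)) * G s + mu ^+ 2).
  apply: avg_ge0 => s.
  have -> : G s ^+ 2 + - (2 * mu) * G s + mu ^+ 2 = (G s - mu) ^+ 2 by ring.
  exact: sqr_ge0.
rewrite !avg_add avg_scale (avg_cst hn) -/mu in h0.
lra.
Qed.

Lemma expR_m32 : 8^-1 <= expR (- (3 / 2)) :> R.
Proof.
have h : 2^-1 <= expR (- 2^-1) :> R.
  have := expR_ge1Dx (- 2^-1 : R).
  have -> : 1 + - 2^-1 = 2^-1 :> R by field.
  done.
have -> : - (3 / 2) = - 2^-1 + - 2^-1 + - 2^-1 :> R by field.
rewrite !expRD.
have -> : 8^-1 = 2^-1 * 2^-1 * 2^-1 :> R by field.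
have h2 : 0 <= 2^-1 :> R by rewrite invr_ge0 ler0n.
by rewrite !ler_pM // ?mulr_ge0.
Qed.

Lemma final m eta delta : (0 < m)%N -> 0 < eta -> 0 < delta -> delta < 1 ->
  4 * Dm ^+ 2 / eta ^+ 2 * Num.max 1 (ln delta^-1) <= m%:R ->
  1 - delta <= avg m (fun s => ((d (Sb s) b <= eta)%R : bool)%:R).
Proof.
move=> m0 eta0 d0 d1 H.
set F := fun s => d (Sb s) b.
set fl := fun s => ((eta < F s)%R : bool)%:R : R.
have -> : avg m (fun s => ((d (Sb s) b <= eta)%R : bool)%:R) = 1 - avg m fl.
  rewrite (_ : 1 - avg m fl = avg m (fun s => 1 - fl s)); last by rewrite (avg_sub hn) (avg_cst hn).
  apply: (avg_ext hn) => s _.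
  by rewrite /fl /F; case: leP => _ /=; rewrite ?subr0 ?subrr.
suff : avg m fl <= delta by lra.
set L := ln delta^-1.
have dL : delta = expR (- L).
  rewrite expRN /L lnK ?invrK // posrE invr_gt0 //.
have L0 : 0 < L by rewrite /L ln_gt0 // invf_gt1.
set L' := Num.max 1 L.
have L'1 : 1 <= L' by rewrite /L' le_max lexx.
have L'L : L <= L' by rewrite /L' le_max lexx orbT.
have mR : 0 < m%:R :> R by rewrite ltr0n.
set V := Fb b.
set E2 := avg m (fun s => F s ^+ 2).
have hE2 : m%:R * E2 <= V by apply: Ebound.
have hV : 2 * V <= Dm ^+ 2 by apply: V_le.
have E20 : 0 <= E2 by apply: avg_ge0 => s; apply: sqr_ge0.
have fl0 : 0 <= avg m fl by apply: avg_ge0 => s; rewrite /fl ler0n.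
have e2 : 0 < eta ^+ 2 by apply: exprn_gt0.
have H2 : 4 * Dm ^+ 2 * L' <= m%:R * eta ^+ 2.
  by move: H; rewrite mulrAC ler_pdivrMr //.
have cheb : avg m fl * eta ^+ 2 <= E2.
  rewrite /E2 mulrC -avg_scale; apply: (avg_le hn) => s _.
  rewrite /fl; case: ltP => h /=; last by rewrite mulr0 sqr_ge0.
  rewrite mulr1 lerXn2r ?nnegrE ?(ltW eta0) ?d_ge0 //.
  exact: ltW.
have D0' := D0.
have [Dz|Dp] := eqVneq Dm 0.
  rewrite Dz expr0n /= in hV.
  have : avg m fl * eta ^+ 2 * m%:R <= 0 by nra.
  have em : 0 < eta ^+ 2 * m%:R by rewrite mulr_gt0.
  rewrite -mulrA pmulr_lle0 //; lra.
have Dp' : 0 < Dm by rewrite lt_def Dp D0.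
have cheb2 : avg m fl * (8 * L') <= 1.
  have h : avg m fl * eta ^+ 2 * m%:R <= Dm ^+ 2 / 2 by nra.
  have D2 : 0 < Dm ^+ 2 by apply: exprn_gt0.
  nra.
have [Ls|Lb] := ltP L' (3 / 2).
  have LL : L' = 1 \/ L' = L by rewrite /L'; case: (leP 1 L) => _; [right|left].
  have hL : L <= 3 / 2 by lra.
  apply: (le_trans (y := 8^-1)).
    have : avg m fl * 8 <= 1 by nra.
    by move=> h; rewrite -[8^-1]mul1r ler_pdivlMr ?ltr0n.
  rewrite dL; apply: (le_trans expR_m32); rewrite ler_expR; lra.
have L1 : 1 <= L by move: Lb; rewrite /L' le_max => /orP[h|h]; lra.
have LE : L' = L by apply/le_anti; rewrite /L' ge_max L1 lexx le_max lexx orbT.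
rewrite LE in H2 Lb.
set mu := avg m F.
have mu0 : 0 <= mu by apply: avg_ge0 => s; apply: d_ge0.
have cs : mu ^+ 2 <= E2 by apply: avg_cs.
have hE : E2 * 12 <= eta ^+ 2.
  have a1 : m%:R * E2 * (8 * L) <= V * (8 * L) by apply: ler_wpM2r => //; lra.
  have a2 : V * (8 * L) <= 4 * Dm ^+ 2 * L by nra.
  have a3 : m%:R * (E2 * (8 * L)) <= m%:R * eta ^+ 2 by lra.
  rewrite ler_pM2l // in a3.
  apply: le_trans a3; apply: ler_wpM2l => //; lra.
have mu_le : mu <= 29 / 100 * eta by nra.
set s0 := eta - mu.
have s0p : 0 < s0 by rewrite /s0; lra.
have s0sq : eta ^+ 2 <= 2 * s0 ^+ 2 by rewrite /s0; nra.
set c := Dm / m%:R.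
set l := s0 * m%:R / Dm ^+ 2.
have D2 : 0 < Dm ^+ 2 by apply: exprn_gt0.
have l0 : 0 <= l by rewrite /l; apply: divr_ge0; [apply: mulr_ge0; lra | lra].
have c0 : 0 <= c by rewrite /c divr_ge0 // ler0n.
have hc := conc hn l c0 (bd_F m0).
have hfl : avg m fl <= avg m (fun s => expR (- (l * s0)) * expR (l * (F s - mu))).
  apply: (avg_le hn) => s _.
  rewrite -expRD /fl; case: ltP => h /=; last exact: expR_ge0.
  rewrite -expR0 ler_expR.
  have : 0 <= l * (F s - eta) by apply: mulr_ge0 => //; lra.
  rewrite /s0; lra.
rewrite avg_scale in hfl.
apply: (le_trans hfl).
apply: (le_trans (ler_wpM2l (expR_ge0 _) hc)).
rewrite -expRD dL ler_expR.
have mn : m%:R != 0 :> R by rewrite gt_eqF.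
have -> : - (l * s0) + m%:R * (l * l * (c * c)) / 2 = - (s0 ^+ 2 * m%:R / (2 * Dm ^+ 2)).
  rewrite /l /c; field.
  by rewrite Dp mn.
rewrite lerN2 ler_pdivlMr; last by rewrite mulr_gt0.
nra.
Qed.

End Main.
End T5.

Import T3 T5.

Theorem mainTheorem16 (R : realType) (M : Type) (d : M -> M -> R)
  (geo : M -> M -> R -> M)
  (hM : is_CAT0 d)
  (hgeo : forall x y, is_geodesic d (geo x y) x y)
  (n m : nat) (hn : (0 < n)%N) (hm : (0 < m)%N)
  (x : 'I_n -> M) (b : M)
  (hb : forall c : M, n%:R^-1 * \sum_(i < n) d (x i) b ^+ 2
                      <= n%:R^-1 * \sum_(i < n) d (x i) c ^+ 2)
  (eta delta : R) (heta : 0 < eta) (hdelta0 : 0 < delta) (hdelta1 : delta < 1) :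
  let D := \big[Num.max/0]_(i < n) \big[Num.max/0]_(j < n) d (x i) (x j) in
  4 * D ^+ 2 / eta ^+ 2 * Num.max 1 (ln delta^-1) <= m%:R ->
  1 - delta <=
    #|[set I : {ffun 'I_m -> 'I_n} |
        d (iter_bary geo (fun k => k%:R^-1) b [seq x (I k) | k <- enum 'I_m]) b
          <= eta]|%:R
    / #|{: {ffun 'I_m -> 'I_n}}|%:R.
Proof.
move=> D H.
have := final hM hgeo hn hb hm heta hdelta0 hdelta1 H.
set g := fun s : seq 'I_n => ((d (Sb geo x b s) b <= eta)%R : bool)%:R : R.
have -> : #|[set I : {ffun 'I_m -> 'I_n} |
        d (iter_bary geo (fun k => k%:R^-1) b [seq x (I k) | k <- enum 'I_m]) b
          <= eta]|%:R = \sum_(I : {ffun 'I_m -> 'I_n}) g [seq I k | k <- enum 'I_m].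
  rewrite -sum1_card natr_sum big_mkcond /=; apply: eq_bigr => I _.
  by rewrite inE /g /Sb -map_comp; case: (_ <= _).
rewrite (sum_ffun_avg hn) card_ffun !card_ord natrX.
have nm : n%:R ^+ m != 0 :> R by rewrite expf_neq0 // pnatr_eq0 -lt0n.
by rewrite [n%:R ^+ m * _]mulrC mulfK.
Qed.
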